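(* Let $(f^*,g^* )$ be a stationary $\hat\beta$-discounted Nash equilibrium of a two-player discrete time stochastic game for some $\hat\beta\in[0,1)$, and suppose: (D1) $(f^*,g^* )$ is pure, i.e. for each $s\in S$ there are actions $a^1_s\in A^1(s)$, $a^2_s\in A^2(s)$ with $f^*(s,a^1_s)=1$, $g^*(s,a^2_s)=1$; (D2) $P(f^*,g^* )=I$, i.e. every state is absorbing under $(f^*,g^* )$; (D3) for all $s\in S$, $a^1\in A^1(s)$: $r^1(s,a^1,a^2_s)\ge\sum_{s'\in S}p(s'\mid s,a^1,a^2_s)\,r^1(s',a^1_{s'},a^2_{s'})$, and for all $s\in S$, $a^2\in A^2(s)$: $r^2(s,a^1_s,a^2)\ge\sum_{s'\in S}p(s'\mid s,a^1_s,a^2)\,r^2(s',a^1_{s'},a^2_{s'})$. Then $(f^*,g^* )$ is a Blackwell-Nash equilibrium.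
   Context: A two-player discrete time stochastic game consists of a finite state set $S$, finite nonempty action sets $A^1(s),A^2(s)$ for each $s\in S$, reward functions $r^i(s,a^1,a^2)$ for $i=1,2$, and transition probabilities $p(s'\mid s,a^1,a^2)$. A stationary strategy of player 1 is $f=(f(s))_{s\in S}$ with $f(s)$ a probability distribution on $A^1(s)$, $f(s,a^1)$ denoting the probability of $a^1$; similarly $g$ for player 2. For a stationary pair $(f,g)$ let $r^i(s,f,g)=\sum_{a^1,a^2}f(s,a^1)g(s,a^2)r^i(s,a^1,a^2)$ and $P(f,g)$ the $|S|\times|S|$ matrix with entries $P(f,g)_{ss'}=\sum_{a^1,a^2}f(s,a^1)g(s,a^2)p(s'\mid s,a^1,a^2)$. For $\beta\in[0,1)$ the $\beta$-discounted payoff vector of player $i$ is $v^i_\beta(f,g)=(I-\beta P(f,g))^{-1}r^i(f,g)$, with $s$-th component $v^i_\beta(s,f,g)$. A stationary pair $(f^*,g^* )$ is a $\beta$-discounted Nash equilibrium if for all $s\in S$, $v^1_\beta(s,f^*,g^* )\ge v^1_\beta(s,f,g^* )$ for all stationary $f$ and $v^2_\beta(s,f^*,g^* )\ge v^2_\beta(s,f^*,g)$ for all stationary $g$. A stationary pair is a Blackwell-Nash equilibrium (BNE) if there is $\beta_0\in[0,1)$ such that it is a $\beta$-discounted Nash equilibrium for every $\beta\in[\beta_0,1)$. *)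

(* Defs.v *)
(* Real numbers are abstracted as an arbitrary real field
   R : realFieldType (the statement is purely algebraic/order-theoretic). *)
From HB Require Import structures.
From mathcomp Require Import all_boot all_order all_algebra.
Unset Printing Implicit Defensive.
Import Order.TTheory GRing.Theory Num.Theory.
Local Open Scope ring_scope.

Section Game.
Variables (R : realFieldType) (n : nat) (A1 A2 : 'I_n -> finType).

(* transition law p s a1 a2 s' = p(s' | s, a1, a2) *)
Definition transition_law (p : forall s, A1 s -> A2 s -> 'I_n -> R) : Prop :=
  forall s (a1 : A1 s) (a2 : A2 s),
    (forall s', 0 <= p s a1 a2 s') /\ \sum_(s' < n) p s a1 a2 s' = 1.

Definition stationary1 (f : forall s, A1 s -> R) : Prop :=
  forall s, (forall a, 0 <= f s a) /\ \sum_(a : A1 s) f s a = 1.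
Definition stationary2 (g : forall s, A2 s -> R) : Prop :=
  forall s, (forall a, 0 <= g s a) /\ \sum_(a : A2 s) g s a = 1.

Variable (p : forall s, A1 s -> A2 s -> 'I_n -> R).

Definition rew (r : forall s, A1 s -> A2 s -> R)
    (f : forall s, A1 s -> R) (g : forall s, A2 s -> R) : 'cV[R]_n :=
  \col_(s < n) \sum_(a1 : A1 s) \sum_(a2 : A2 s) f s a1 * g s a2 * r s a1 a2.

Definition Pmx (f : forall s, A1 s -> R) (g : forall s, A2 s -> R) : 'M[R]_n :=
  \matrix_(s < n, s' < n) \sum_(a1 : A1 s) \sum_(a2 : A2 s) f s a1 * g s a2 * p s a1 a2 s'.

Definition vdisc (r : forall s, A1 s -> A2 s -> R) (beta : R)
    (f : forall s, A1 s -> R) (g : forall s, A2 s -> R) : 'cV[R]_n :=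
  invmx (1%:M - beta *: Pmx f g) *m rew r f g.

Definition discNash (r1 r2 : forall s, A1 s -> A2 s -> R) (beta : R)
    (fs : forall s, A1 s -> R) (gs : forall s, A2 s -> R) : Prop :=
  forall s : 'I_n,
    (forall f, stationary1 f -> vdisc r1 beta f gs s 0 <= vdisc r1 beta fs gs s 0) /\
    (forall g, stationary2 g -> vdisc r2 beta fs g s 0 <= vdisc r2 beta fs gs s 0).

Definition BlackwellNash (r1 r2 : forall s, A1 s -> A2 s -> R)
    (fs : forall s, A1 s -> R) (gs : forall s, A2 s -> R) : Prop :=
  exists beta0 : R, 0 <= beta0 /\ beta0 < 1 /\
    forall beta : R, beta0 <= beta -> beta < 1 -> discNash r1 r2 beta fs gs.

End Game.

Arguments transition_law {R n A1 A2} p.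
Arguments stationary1 {R n A1} f.
Arguments stationary2 {R n A2} g.
Arguments rew {R n A1 A2} r f g.
Arguments Pmx {R n A1 A2} p f g.
Arguments vdisc {R n A1 A2} p r beta f g.
Arguments discNash {R n A1 A2} p r1 r2 beta fs gs.
Arguments BlackwellNash {R n A1 A2} p r1 r2 fs gs.

(* Main.v *)
Require Import Defs.
From HB Require Import structures.
From mathcomp Require Import all_boot all_order all_algebra.
From mathcomp Require Import ring lra.
Import Order.TTheory GRing.Theory Num.Theory.
Local Open Scope ring_scope.

Lemma mulM_entry (R : realFieldType) n (P : 'M[R]_n) (b : R) (y : 'cV[R]_n) i :
  ((1%:M - b *: P) *m y) i 0 = y i 0 - b * \sum_j P i j * y j 0.
Proof. by rewrite mulmxBl mul1mx -scalemxAl !mxE. Qed.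

Lemma minprinc (R : realFieldType) n (P : 'M[R]_n) (b : R) (y : 'cV[R]_n) :
  (forall i j, 0 <= P i j) -> (forall i, \sum_j P i j = 1) -> 0 <= b -> b < 1 ->
  (forall i, 0 <= ((1%:M - b *: P) *m y) i 0) -> forall i, 0 <= y i 0.
Proof.
move=> P0 P1 b0 b1 H i.
case: (arg_minP (fun k => y k 0) (P:=xpredT) (i0:=i) isT) => im _ Him.
suff: 0 <= y im 0 by move=> h; apply: le_trans h (Him i isT).
rewrite leNgt; apply/negP => hneg.
have hS : y im 0 <= \sum_j P im j * y j 0.
  apply: (@le_trans _ _ (\sum_j P im j * y im 0)).
    by rewrite -big_distrl /= P1 mul1r.
  by apply: ler_sum => j _; apply: ler_wpM2l => //; apply: Him.
have := H im; rewrite mulM_entry => h.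
have h2 : b * y im 0 <= b * \sum_j P im j * y j 0 by apply: ler_wpM2l.
nra.
Qed.

Lemma unit_M (R : realFieldType) n (P : 'M[R]_n) (b : R) :
  (forall i j, 0 <= P i j) -> (forall i, \sum_j P i j = 1) -> 0 <= b -> b < 1 ->
  (1%:M - b *: P) \in unitmx.
Proof.
move=> P0 P1 b0 b1; rewrite -unitmx_tr -row_free_unit; apply: inj_row_free => v hv.
have hA : (1%:M - b *: P) *m v^T = 0 by rewrite -[LHS]trmxK trmx_mul trmxK hv trmx0.
have e1 : forall k, 0 <= v^T k 0.
  by apply: (@minprinc _ _ P b) => // k; rewrite hA mxE.
have e2 : forall k, 0 <= (- v^T) k 0.
  by apply: (@minprinc _ _ P b) => // k; rewrite mulmxN hA oppr0 mxE.
apply/matrixP => i j; rewrite (ord1 i) mxE.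
have := e1 j; have := e2 j; rewrite !mxE => h2 h1.
apply/eqP; rewrite eq_le h1 andbT; by rewrite -oppr_ge0.
Qed.

Lemma pure_sum (R : realFieldType) (A : finType) (g : A -> R) a0 (F : A -> R) :
  (forall a, 0 <= g a) -> \sum_a g a = 1 -> g a0 = 1 -> \sum_a g a * F a = F a0.
Proof.
move=> g0 gs ga0; rewrite (bigD1 a0) //= ga0 mul1r.
rewrite (bigD1 a0) //= ga0 in gs.
have hz : \sum_(a | a != a0) g a = 0 by apply: (addrI 1); rewrite gs addr0.
rewrite big1 ?addr0 // => a ha.
by rewrite (psumr_eq0P (fun i _ => g0 i) hz ha) mul0r.
Qed.

Lemma Pmx_pure (R : realFieldType) n (A1 A2 : 'I_n -> finType)
    (p : forall s, A1 s -> A2 s -> 'I_n -> R) f (g : forall s, A2 s -> R) a2s :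
  stationary2 g -> (forall s, g s (a2s s) = 1) ->
  forall s j, Pmx p f g s j = \sum_a f s a * p s a (a2s s) j.
Proof.
move=> hg hp s j; rewrite mxE; apply: eq_bigr => a _.
under eq_bigr do rewrite -mulrA; rewrite -big_distrr /=.
by rewrite (@pure_sum _ _ _ _ _ (hg s).1 (hg s).2 (hp s)).
Qed.

Lemma rew_pure (R : realFieldType) n (A1 A2 : 'I_n -> finType)
    (r : forall s, A1 s -> A2 s -> R) f (g : forall s, A2 s -> R) a2s :
  stationary2 g -> (forall s, g s (a2s s) = 1) ->
  forall s, rew r f g s 0 = \sum_a f s a * r s a (a2s s).
Proof.
move=> hg hp s; rewrite mxE; apply: eq_bigr => a _.
under eq_bigr do rewrite -mulrA; rewrite -big_distrr /=.
by rewrite (@pure_sum _ _ _ _ _ (hg s).1 (hg s).2 (hp s)).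
Qed.

Lemma Pmx_stoch (R : realFieldType) n (A1 A2 : 'I_n -> finType)
    (p : forall s, A1 s -> A2 s -> 'I_n -> R) f g :
  transition_law p -> stationary1 f -> stationary2 g ->
  (forall i j, 0 <= Pmx p f g i j) /\ (forall i, \sum_j Pmx p f g i j = 1).
Proof.
move=> hp hf hg; split.
  move=> i j; rewrite mxE; apply: sumr_ge0 => a1 _; apply: sumr_ge0 => a2 _.
  by rewrite !mulr_ge0 //; [apply: (hf i).1 | apply: (hg i).1 | apply: (hp i a1 a2).1].
move=> i; under eq_bigr do rewrite mxE.
rewrite exchange_big /=.
under eq_bigr do rewrite exchange_big /=.
transitivity (\sum_(a1 : A1 i) \sum_(a2 : A2 i) f i a1 * g i a2).
  apply: eq_bigr => a1 _; apply: eq_bigr => a2 _.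
  by rewrite -big_distrr /= (hp i a1 a2).2 mulr1.
under eq_bigr do rewrite -big_distrr /= (hg i).2 mulr1.
exact: (hf i).2.
Qed.

Lemma Pmx_row (R : realFieldType) n (A1 A2 : 'I_n -> finType)
    (p : forall s, A1 s -> A2 s -> 'I_n -> R) f1 f2 g s :
  (forall a, f1 s a = f2 s a) -> forall j, Pmx p f1 g s j = Pmx p f2 g s j.
Proof. by move=> h j; rewrite !mxE; apply: eq_bigr => a _; rewrite h. Qed.

Lemma rew_row (R : realFieldType) n (A1 A2 : 'I_n -> finType)
    (r : forall s, A1 s -> A2 s -> R) f1 f2 g s :
  (forall a, f1 s a = f2 s a) -> rew r f1 g s 0 = rew r f2 g s 0.
Proof. by move=> h; rewrite !mxE; apply: eq_bigr => a _; rewrite h. Qed.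

Lemma Mu_entry (R : realFieldType) n (P : 'M[R]_n) (b : R) (w : 'I_n -> R) i :
  b < 1 ->
  ((1%:M - b *: P) *m \col_j (w j / (1 - b))) i 0 * (1 - b) =
  w i - b * \sum_j P i j * w j.
Proof.
move=> b1; rewrite mulM_entry mxE.
have -> : \sum_j P i j * (\col_j0 (w j0 / (1 - b))) j 0 = (\sum_j P i j * w j) / (1 - b).
  by rewrite big_distrl; apply: eq_bigr => j _; rewrite mxE mulrA.
have : 1 - b != 0 by rewrite subr_eq0 eq_sym lt_eqF.
move=> h; field; exact: h.
Qed.
Arguments Pmx_stoch {R n A1 A2 p f g}.
Arguments unit_M {R n P b}.
Arguments rew_row {R n A1 A2 r f1 f2 g s}.
Arguments Pmx_row {R n A1 A2 p f1 f2 g s}.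
Arguments minprinc {R n P b y}.

Lemma player1 (R : realFieldType) n (A1 A2 : 'I_n -> finType)
    (p : forall s, A1 s -> A2 s -> 'I_n -> R) (r : forall s, A1 s -> A2 s -> R)
    fs gs (hb : R) (a1s : forall s, A1 s) (a2s : forall s, A2 s) :
  transition_law p -> stationary1 fs -> stationary2 gs -> 0 <= hb -> hb < 1 ->
  (forall s f, stationary1 f -> vdisc p r hb f gs s 0 <= vdisc p r hb fs gs s 0) ->
  (forall s, fs s (a1s s) = 1) -> (forall s, gs s (a2s s) = 1) ->
  Pmx p fs gs = 1%:M ->
  (forall s a1, \sum_(s' < n) p s a1 (a2s s) s' * r s' (a1s s') (a2s s') <= r s a1 (a2s s)) ->
  forall b, hb <= b -> b < 1 ->
  forall s f, stationary1 f -> vdisc p r b f gs s 0 <= vdisc p r b fs gs s 0.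
Proof.
move=> hp hfs hgs hb0 hb1 hN hfp hgp hP1 hD3.
pose w s := r s (a1s s) (a2s s).
have hw : forall s, rew r fs gs s 0 = w s.
  move=> s; rewrite (@rew_pure _ _ _ _ _ _ _ _ hgs hgp) (@pure_sum _ _ _ _ _ (hfs s).1 (hfs s).2 (hfp s)).
  by [].
have vfs : forall b, 0 <= b -> b < 1 -> vdisc p r b fs gs = \col_s (w s / (1 - b)).
  move=> b b0 b1.
  have [P0 P1] := Pmx_stoch hp hfs hgs.
  have hu := unit_M P0 P1 b0 b1.
  rewrite /vdisc.
  suff -> : rew r fs gs = (1%:M - b *: Pmx p fs gs) *m \col_s (w s / (1 - b)).
    by rewrite mulKmx.
  apply/matrixP => i j; rewrite (ord1 j).
  have hb' : 1 - b != 0 by rewrite subr_eq0 eq_sym lt_eqF.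
  apply: (mulIf hb'); rewrite Mu_entry // hw hP1.
  have -> : \sum_j0 (1%:M : 'M[R]_n) i j0 * w j0 = w i.
    by rewrite (bigD1 i) //= big1 ?addr0 => [|k hk]; rewrite mxE ?eqxx ?mul1r // eq_sym (negbTE hk) mul0r.
  by field.
have D3avg : forall f, stationary1 f -> forall s,
    \sum_j Pmx p f gs s j * w j <= rew r f gs s 0.
  move=> f hf s; rewrite (@rew_pure _ _ _ _ _ _ _ _ hgs hgp).
  under eq_bigr do rewrite (@Pmx_pure _ _ _ _ _ _ _ _ hgs hgp) big_distrl /=.
  rewrite exchange_big /=; apply: ler_sum => a _.
  under eq_bigr do rewrite -mulrA; rewrite -big_distrr /=.
  by apply: ler_wpM2l; [apply: (hf s).1 | apply: hD3].
have key : forall f, stationary1 f -> forall s,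
    (1 - hb) * rew r f gs s 0 + hb * \sum_j Pmx p f gs s j * w j <= w s.
  move=> f hf s.
  pose fd := fun s' => if s' == s then f s' else fs s'.
  have hfd : stationary1 fd by move=> s'; rewrite /fd; case: (s' == s); [apply: hf|apply: hfs].
  have fdE : forall a, fd s a = f s a by move=> a; rewrite /fd eqxx.
  have fdE' : forall s', s' != s -> forall a, fd s' a = fs s' a.
    by move=> s' h a; rewrite /fd (negbTE h).
  have [P0 P1] := Pmx_stoch hp hfd hgs.
  have hu := unit_M P0 P1 hb0 hb1.
  have hMv : (1%:M - hb *: Pmx p fd gs) *m vdisc p r hb fd gs = rew r fd gs.
    by rewrite /vdisc mulKVmx.
  pose e := \col_s (w s / (1 - hb)) - vdisc p r hb fd gs.
  have e0 : forall k, 0 <= e k 0.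
    move=> k; have := hN k fd hfd; rewrite vfs // => h.
    by rewrite /e mxE [X in _ + X]mxE subr_ge0.
  have hb' : 1 - hb != 0 by rewrite subr_eq0 eq_sym lt_eqF.
  have Me_other : forall k, k != s -> ((1%:M - hb *: Pmx p fd gs) *m e) k 0 = 0.
    move=> k hk; rewrite /e mulmxBr hMv mxE [X in _ + X]mxE.
    apply/eqP; rewrite subr_eq0; apply/eqP.
    apply: (mulIf hb'); rewrite Mu_entry //.
    rewrite (rew_row (fdE' k hk)) hw.
    have -> : \sum_j Pmx p fd gs k j * w j = w k.
      rewrite (eq_bigr (fun j => (1%:M : 'M[R]_n) k j * w j)); last first.
        by move=> j _; rewrite (Pmx_row (fdE' k hk)) hP1.
      by rewrite (bigD1 k) //= big1 ?addr0 => [|j hj]; rewrite mxE ?eqxx ?mul1r // eq_sym (negbTE hj) mul0r.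
    by field.
  have Me_s : 0 <= ((1%:M - hb *: Pmx p fd gs) *m e) s 0.
    rewrite leNgt; apply/negP => hneg.
    have ne0 : forall k, 0 <= (- e) k 0.
      apply: (minprinc P0 P1 hb0 hb1) => k.
      rewrite mulmxN mxE oppr_ge0.
      by case: (eqVneq k s) => [->|hk]; [exact: ltW | rewrite Me_other].
    have ez : forall k, e k 0 = 0.
      move=> k; apply/eqP; rewrite eq_le e0 andbT.
      by have := ne0 k; rewrite mxE oppr_ge0.
    have : ((1%:M - hb *: Pmx p fd gs) *m e) s 0 = 0.
      rewrite mulM_entry ez big1 ?mulr0 ?subr0 // => j _.
      by rewrite ez mulr0.
    by move=> h; rewrite h ltxx in hneg.
  move: Me_s; rewrite /e mulmxBr hMv mxE [X in _ + X]mxE => h.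
  have hpos : 0 <= 1 - hb by rewrite subr_ge0 ltW.
  have h2 := mulr_ge0 h hpos.
  rewrite mulrBl Mu_entry // (rew_row fdE) in h2.
  have hS : \sum_j Pmx p fd gs s j * w j = \sum_j Pmx p f gs s j * w j.
    by apply: eq_bigr => j _; rewrite (Pmx_row fdE).
  rewrite hS in h2.
  nra.
move=> b hbb b1 s f hf.
have b0 : 0 <= b by apply: le_trans hbb.
have [P0 P1] := Pmx_stoch hp hf hgs.
have hu := unit_M P0 P1 b0 b1.
rewrite vfs // mxE.
suff : forall k, 0 <= (\col_s (w s/(1-b)) - vdisc p r b f gs) k 0.
  by move=> /(_ s); rewrite !mxE subr_ge0.
apply: (minprinc P0 P1 b0 b1) => k.
rewrite mulmxBr /vdisc mulKVmx // mxE [X in _ + X]mxE subr_ge0.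
have hb' : 0 < 1 - b by rewrite subr_gt0.
rewrite -(ler_pM2r hb') Mu_entry //.
have k1 := key f hf k; have k2 := D3avg f hf k.
have k3 : 0 <= (b - hb) * (rew r f gs k 0 - \sum_j Pmx p f gs k j * w j).
  by apply: mulr_ge0; rewrite subr_ge0.
nra.
Qed.

Lemma vdisc_swap (R : realFieldType) n (A1 A2 : 'I_n -> finType)
    (p : forall s, A1 s -> A2 s -> 'I_n -> R) (r : forall s, A1 s -> A2 s -> R) b f g :
  vdisc p r b f g = vdisc (fun s (a2 : A2 s) (a1 : A1 s) => p s a1 a2)
                          (fun s (a2 : A2 s) (a1 : A1 s) => r s a1 a2) b g f.
Proof.
have hP : Pmx p f g = Pmx (fun s (a2 : A2 s) (a1 : A1 s) => p s a1 a2) g f.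
  apply/matrixP => i j; rewrite !mxE exchange_big; apply: eq_bigr => a2 _.
  by apply: eq_bigr => a1 _; rewrite /= (mulrC (f i a1)).
have hr : rew r f g = rew (fun s (a2 : A2 s) (a1 : A1 s) => r s a1 a2) g f.
  apply/matrixP => i j; rewrite !mxE exchange_big; apply: eq_bigr => a2 _.
  by apply: eq_bigr => a1 _; rewrite /= (mulrC (f i a1)).
by rewrite /vdisc hP hr.
Qed.

Lemma Pmx_swap (R : realFieldType) n (A1 A2 : 'I_n -> finType)
    (p : forall s, A1 s -> A2 s -> 'I_n -> R) f g :
  Pmx p f g = Pmx (fun s (a2 : A2 s) (a1 : A1 s) => p s a1 a2) g f.
Proof.
  apply/matrixP => i j; rewrite !mxE exchange_big; apply: eq_bigr => a2 _.
  by apply: eq_bigr => a1 _; rewrite /= (mulrC (f i a1)).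
Qed.

Theorem theorem3 (R : realFieldType) (n : nat) (A1 A2 : 'I_n -> finType)
    (p : forall s, A1 s -> A2 s -> 'I_n -> R)
    (r1 r2 : forall s, A1 s -> A2 s -> R)
    (fs : forall s, A1 s -> R) (gs : forall s, A2 s -> R)
    (hbeta : R) (a1s : forall s, A1 s) (a2s : forall s, A2 s) :
  (forall s, 0 < #|A1 s|)%N -> (forall s, 0 < #|A2 s|)%N ->
  transition_law p ->
  stationary1 fs -> stationary2 gs ->
  0 <= hbeta -> hbeta < 1 ->
  discNash p r1 r2 hbeta fs gs ->
  (* (D1) pure *)
  (forall s, fs s (a1s s) = 1) -> (forall s, gs s (a2s s) = 1) ->
  (* (D2) every state absorbing *)
  Pmx p fs gs = 1%:M ->
  (* (D3) *)
  (forall s (a1 : A1 s),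
     \sum_(s' < n) p s a1 (a2s s) s' * r1 s' (a1s s') (a2s s') <= r1 s a1 (a2s s)) ->
  (forall s (a2 : A2 s),
     \sum_(s' < n) p s (a1s s) a2 s' * r2 s' (a1s s') (a2s s') <= r2 s (a1s s) a2) ->
  BlackwellNash p r1 r2 fs gs.
Proof.
move=> _ _ hp hfs hgs hb0 hb1 hN hfp hgp hP1 hD1 hD2.
exists hbeta; split => //; split => // b hbb b1 s; split.
  move=> f hf. apply: (@player1 _ _ _ _ _ _ _ _ _ _ _ hp hfs hgs hb0 hb1 _ hfp hgp hP1 hD1 b hbb b1 s f hf).
  by move=> s' f' hf'; exact: (hN s').1 f' hf'.
move=> g hg; rewrite (@vdisc_swap _ _ _ _ p r2 b fs g) (@vdisc_swap _ _ _ _ p r2 b fs gs).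
apply: (@player1 _ _ _ _ _ _ gs fs hbeta a2s a1s _ hgs hfs hb0 hb1 _ hgp hfp _ hD2 b hbb b1 s g hg).
- by move=> s' a2 a1; exact: hp.
- by move=> s' g' hg'; rewrite -(@vdisc_swap _ _ _ _ p r2 hbeta fs g') -(@vdisc_swap _ _ _ _ p r2 hbeta fs gs); exact: (hN s').2 g' hg'.
- by rewrite -Pmx_swap.
Qed.
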